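(* For every $p\in[0,1]$, \[ p \le \tfrac12\Big(1+\sqrt{1-h(p)^{\ln 4}}\Big), \] where $h(p) = p\log_2\frac1p + (1-p)\log_2\frac1{1-p}$ (with $0\log_2\frac10 = 0$). *)

(* Defs.v *)
From Stdlib Require Import Reals.
Open Scope R_scope.

Definition log2 (x : R) : R := ln x / ln 2.

Definition xlog2inv (x : R) : R :=
  if Req_EM_T x 0 then 0 else x * log2 (1 / x).

Definition h (p : R) : R := xlog2inv p + xlog2inv (1 - p).

(* real power x^y for x >= 0 and y > 0, with 0^y = 0
   (Stdlib's Rpower 0 y would give 1, hence the explicit case) *)
Definition rpow (x y : R) : R :=
  if Req_EM_T x 0 then 0 else Rpower x y.

(* Main.v *)
Require Import Defs.
From Stdlib Require Import Reals Lra Psatz.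
From Coquelicot Require Import Coquelicot.
Open Scope R_scope.

Lemma incr (f f' : R -> R) a b : a <= b ->
  (forall c, a <= c <= b -> is_derive f c (f' c)) ->
  (forall c, a < c < b -> 0 <= f' c) -> f a <= f b.
Proof.
  intros Hab Hd Hp. destruct (Req_dec a b) as [->|Hne]; [lra|].
  destruct (MVT_cor2 f f' a b) as [c [Hc Hc2]]; [lra| |].
  - intros c Hc. apply is_derive_Reals. auto.
  - specialize (Hp c Hc2). nra.
Qed.

Lemma decr (f f' : R -> R) a b : a <= b ->
  (forall c, a <= c <= b -> is_derive f c (f' c)) ->
  (forall c, a < c < b -> f' c <= 0) -> f b <= f a.
Proof.
  intros Hab Hd Hp. destruct (Req_dec a b) as [->|Hne]; [lra|].
  destruct (MVT_cor2 f f' a b) as [c [Hc Hc2]]; [lra| |].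
  - intros c Hc. apply is_derive_Reals. auto.
  - specialize (Hp c Hc2). nra.
Qed.

Definition SC (g : R -> R) a b := forall y z, a <= y -> y <= z -> z <= b -> g y < 0 -> g z < 0.

Lemma sc_nonneg f f' a b : (forall c, a <= c <= b -> is_derive f c (f' c)) ->
  SC f' a b -> 0 <= f a -> 0 <= f b -> forall x, a <= x <= b -> 0 <= f x.
Proof.
  intros Hd Hs Ha Hb x Hx. destruct (Rlt_dec (f' x) 0) as [Hn|Hn].
  - assert (f b <= f x); [|lra].
    apply (decr f f'); [lra| intros; apply Hd; lra |].
    intros c Hc. left. apply (Hs x c); lra.
  - assert (f a <= f x); [|lra].
    apply (incr f f'); [lra| intros; apply Hd; lra |].
    intros c Hc. destruct (Rlt_dec (f' c) 0) as [Hc'|Hc']; [|lra].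
    exfalso; apply Hn; apply (Hs c x); lra.
Qed.

Lemma sc_lift f f' a b : (forall c, a <= c <= b -> is_derive f c (f' c)) ->
  SC f' a b -> 0 <= f a -> SC f a b.
Proof.
  intros Hd Hs Ha y z Hy Hyz Hz Hfy. destruct (Rlt_dec (f' y) 0) as [Hn|Hn].
  - assert (f z <= f y); [|lra].
    apply (decr f f'); [lra| intros; apply Hd; lra |].
    intros c Hc. left. apply (Hs y c); lra.
  - assert (f a <= f y); [|lra].
    apply (incr f f'); [lra| intros; apply Hd; lra |].
    intros c Hc. destruct (Rlt_dec (f' c) 0) as [Hc'|Hc']; [|lra].
    exfalso; apply Hn; apply (Hs c y); lra.
Qed.

Definition Pf x := ln 2 * (1 - x^2) * (ln (1+x) - ln (1-x)) - 2*x*ln 2 + x*(1+x)*ln(1+x) + x*(1-x)*ln(1-x).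
Definition P1 x := ln(1+x) + ln(1-x) + 2*x*(ln(1+x) - ln(1-x))*(1 - ln 2).
Definition P2 x := 2 * ((1 - ln 2)*(ln(1+x) - ln(1-x)) - (2*ln 2 - 1)*x/(1-x^2)).
Definition P3 x := 2 * ((3 - 4*ln 2 - x^2)/((1-x^2)^2)).
Definition Bf x := ln 2*(1-x^2)*ln(1+x) - 2*x*ln 2 + x*(1+x)*ln(1+x).
Definition B1 x := ln(1+x)*(1+2*x-2*x*ln 2) + ln 2*(1-x) - 2*ln 2 + x.
Definition Hx x := ln 2 - ((1+x)*ln(1+x) + (1-x)*ln(1-x))/2.
Definition Tf x := ln(1-x^2) - 2*ln 2*ln(Hx x / ln 2).

Lemma dP x : -1 < x < 1 -> is_derive Pf x (P1 x).
Proof. intros Hx. unfold Pf, P1. auto_derive; [repeat split; lra|]. unfold Rminus. field; repeat split; try lra; nra. Qed.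
Lemma dP1 x : -1 < x < 1 -> is_derive P1 x (P2 x).
Proof. intros Hx. unfold P2, P1. auto_derive; [repeat split; lra|]. unfold Rminus. field; repeat split; try lra; nra. Qed.
Lemma dP2 x : -1 < x < 1 -> is_derive P2 x (P3 x).
Proof. intros Hx. unfold P2, P3. auto_derive; [repeat split; try lra; nra|]. unfold Rminus. field; repeat split; try lra; nra. Qed.
Lemma dB x : -1 < x < 1 -> is_derive Bf x (B1 x).
Proof. intros Hx. unfold Bf, B1. auto_derive; [repeat split; lra|]. unfold Rminus. field; repeat split; try lra; nra. Qed.

Lemma ln2_lt_1 : ln 2 < 1.
Proof.
  rewrite <- (ln_exp 1). apply ln_increasing; [lra|].
  assert (H := exp_ineq1 1 ltac:(lra)). lra.
Qed.
Lemma ln2_gt : / 2 < ln 2. Proof. exact ln_lt_2. Qed.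

Lemma ln1p_bounds x : 0 <= x <= 1 -> 0 <= ln (1+x) <= 1.
Proof.
  intros Hx. split.
  - rewrite <- ln_1. apply ln_le; lra.
  - assert (ln (1+x) <= ln 2) by (apply ln_le; lra). pose proof ln2_lt_1; lra.
Qed.

Definition K := 5 / (2 * ln 2 - 1).
Definition x2 := 1 - exp (- K).

Lemma K_pos : 0 < K.
Proof. unfold K. pose proof ln2_gt. apply Rdiv_lt_0_compat; lra. Qed.

Lemma x2_range : 0 < x2 < 1.
Proof.
  unfold x2. pose proof K_pos. split.
  - assert (exp (-K) < exp 0) by (apply exp_increasing; lra). rewrite exp_0 in H0. lra.
  - pose proof (exp_pos (-K)). lra.
Qed.

Lemma B_lower x : 0 <= x <= 1 -> -5 * (1 - x) <= Bf x.
Proof.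
  intros Hx.
  set (F := fun y => 5 * y - Bf y).
  assert (H : F x <= F 1).
  { apply (incr _ (fun y => 5 - B1 y)); [lra| |].
    - intros c Hc. unfold F, Bf, B1. auto_derive; [lra|]. field. lra.
    - intros c Hc. unfold B1.
      pose proof (ln1p_bounds c ltac:(lra)). pose proof ln2_lt_1. pose proof ln2_gt.
      assert (0 <= 1 + 2*c - 2*c*ln 2 <= 3) by nra.
      assert (ln (1+c) * (1 + 2*c - 2*c*ln 2) <= 3) by nra.
      nra. }
  unfold F in H. assert (Bf 1 = 0).
  { unfold Bf. replace (1+1) with 2 by ring. ring. }
  lra.
Qed.

Lemma P_near x : x2 <= x < 1 -> 0 <= Pf x.
Proof.
  intros Hx. pose proof x2_range. pose proof K_pos. pose proof ln2_lt_1. pose proof ln2_gt.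
  assert (HP : Pf x = Bf x + (1-x)*(-ln(1-x))*(ln 2*(1+x) - x)) by (unfold Pf, Bf; ring).
  assert (HM : ln (1-x) <= - K).
  { rewrite <- (ln_exp (-K)). apply ln_le; unfold x2 in *; lra. }
  assert (HKe : K * (2 * ln 2 - 1) = 5) by (unfold K; field; lra).
  assert (HA : 2 * ln 2 - 1 <= ln 2 * (1+x) - x) by nra.
  pose proof (B_lower x ltac:(lra)).
  assert (K * (2*ln 2 - 1) <= (-ln(1-x))*(ln 2*(1+x) - x)) by nra.
  nra.
Qed.

Lemma P_nonneg x : 0 <= x < 1 -> 0 <= Pf x.
Proof.
  intros Hx. pose proof x2_range.
  destruct (Rle_dec x2 x) as [Hle|Hlt]; [apply P_near; lra|].
  assert (Hd0 : forall c, 0 <= c <= x2 -> -1 < c < 1) by (intros; lra).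
  assert (S3 : SC P3 0 x2).
  { intros y z Hy Hyz Hz Hn. unfold P3 in *.
    assert (0 < (1 - y^2)^2) by (apply pow_lt; nra).
    assert (0 < (1 - z^2)^2) by (apply pow_lt; nra).
    assert (3 - 4*ln 2 - y^2 < 0).
    { destruct (Rlt_dec (3 - 4*ln 2 - y^2) 0); [auto|].
      exfalso. assert (0 <= (3 - 4 * ln 2 - y ^ 2) / (1 - y ^ 2) ^ 2)
        by (apply Rdiv_le_0_compat; lra). lra. }
    assert (3 - 4*ln 2 - z^2 < 0) by nra.
    assert ((3 - 4 * ln 2 - z ^ 2) / (1 - z ^ 2) ^ 2 < 0).
    { unfold Rdiv. apply Rmult_neg_pos; [lra|]. apply Rinv_0_lt_compat; lra. }
    lra. }
  assert (S2 : SC P2 0 x2).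
  { apply (sc_lift P2 P3); auto. intros c Hc; apply dP2; auto.
    unfold P2. replace (1+0) with 1 by ring. replace (1-0) with 1 by ring. rewrite ln_1. lra. }
  assert (S1 : SC P1 0 x2).
  { apply (sc_lift P1 P2); auto. intros c Hc; apply dP1; auto.
    unfold P1. replace (1+0) with 1 by ring. replace (1-0) with 1 by ring. rewrite ln_1. lra. }
  apply (sc_nonneg Pf P1 0 x2); auto.
  - intros c Hc; apply dP; auto.
  - unfold Pf. replace (1+0) with 1 by ring. replace (1-0) with 1 by ring. rewrite ln_1. lra.
  - apply P_near; lra.
  - lra.
Qed.

Lemma Hx_pos x : 0 <= x < 1 -> 0 < Hx x.
Proof.
  intros Hx0.
  assert (E : Hx x = -((1+x)/2 * (ln(1+x) - ln 2) + (1-x)/2*(ln(1-x) - ln 2))) by (unfold Hx; field).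
  assert (ln (1+x) < ln 2) by (apply ln_increasing; lra).
  assert (ln (1-x) < ln 2) by (apply ln_increasing; lra).
  rewrite E. nra.
Qed.

Lemma dT x : 0 <= x < 1 -> is_derive Tf x (Pf x / ((1 - x^2) * Hx x)).
Proof.
  intros Hx0. pose proof (Hx_pos x Hx0) as HH. pose proof ln2_gt.
  assert (0 < Hx x / ln 2) by (apply Rdiv_lt_0_compat; lra).
  unfold Tf, Pf. unfold Hx in *. unfold Rminus, Rdiv in *. auto_derive.
  - repeat split; try lra; try nra.
  - field. repeat split; try lra; nra.
Qed.

Lemma T_nonneg x : 0 <= x < 1 -> 0 <= Tf x.
Proof.
  intros Hx0.
  assert (Tf 0 <= Tf x).
  { apply (incr Tf (fun y => Pf y / ((1 - y^2) * Hx y))); [lra| |].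
    - intros c Hc. apply dT. lra.
    - intros c Hc. apply Rdiv_le_0_compat. apply P_nonneg; lra.
      apply Rmult_lt_0_compat. nra. apply Hx_pos; lra. }
  assert (Tf 0 = 0).
  { pose proof ln2_gt.
    assert (E : Hx 0 = ln 2).
    { unfold Hx. replace (1+0) with 1 by ring. replace (1-0) with 1 by ring. rewrite ln_1. field. }
    unfold Tf. rewrite E. replace (ln 2 / ln 2) with 1 by (field; lra).
    replace (1 - 0^2) with 1 by ring. rewrite ln_1. ring. }
  lra.
Qed.

Require Import Defs.

Lemma exp_le' a b : a <= b -> exp a <= exp b.
Proof. intros H. destruct (Req_dec a b) as [->|]; [lra|]. left; apply exp_increasing; lra. Qed.

Lemma h_eq p : 1/2 < p < 1 -> h p = Hx (2*p-1) / ln 2.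
Proof.
  intros Hp. pose proof ln2_gt.
  unfold h, xlog2inv, log2.
  destruct (Req_EM_T p 0) as [|_]; [lra|].
  destruct (Req_EM_T (1-p) 0) as [|_]; [lra|].
  unfold Hx. replace (1 + (2*p-1)) with (2*p) by ring.
  replace (1 - (2*p-1)) with (2*(1-p)) by ring.
  rewrite !ln_mult by lra.
  replace (1/p) with (/p) by (field; lra).
  replace (1/(1-p)) with (/(1-p)) by (field; lra).
  rewrite !ln_Rinv by lra. field. lra.
Qed.

Theorem lemma2 (p : R) (hp0 : 0 <= p) (hp1 : p <= 1) :
  p <= (1 + sqrt (1 - rpow (h p) (ln 4))) / 2.
Proof.
  pose proof (sqrt_pos (1 - rpow (h p) (ln 4))).
  destruct (Rle_dec p (1/2)) as [Hle|Hgt]; [lra|].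
  destruct (Req_dec p 1) as [->|Hne].
  - assert (h 1 = 0).
    { unfold h, xlog2inv, log2. replace (1-1) with 0 by ring.
      destruct (Req_EM_T 1 0) as [|_]; [lra|].
      destruct (Req_EM_T 0 0) as [_|]; [|lra].
      replace (1/1) with 1 by field. rewrite ln_1. field. pose proof ln2_gt; lra. }
    rewrite H0. unfold rpow. destruct (Req_EM_T 0 0) as [_|]; [|lra].
    replace (1-0) with 1 by ring. rewrite sqrt_1. lra.
  - set (x := 2*p-1).
    assert (Hx0 : 0 <= x < 1) by (unfold x; lra).
    pose proof (T_nonneg x Hx0) as HT. unfold Tf in HT.
    pose proof ln2_gt.
    pose proof (Hx_pos x Hx0).
    assert (Ehp : h p = Hx x / ln 2) by (unfold x; apply h_eq; lra).
    rewrite <- Ehp in HT.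
    assert (Hhp : 0 < h p) by (rewrite Ehp; apply Rdiv_lt_0_compat; lra).
    assert (Hr : rpow (h p) (ln 4) <= 1 - x^2).
    { unfold rpow. destruct (Req_EM_T (h p) 0) as [|_]; [lra|].
      unfold Rpower. replace 4 with (2*2) by ring. rewrite ln_mult by lra.
      rewrite <- (exp_ln (1 - x^2)) by nra. apply exp_le'. lra. }
    assert (Hs : sqrt (x^2) <= sqrt (1 - rpow (h p) (ln 4))) by (apply sqrt_le_1_alt; lra).
    rewrite sqrt_pow2 in Hs by lra. unfold x in Hs. lra.
Qed.
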